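(* Let $\Gamma$ be a group that is nilpotent of class $\le n$, let $S\subseteq\Gamma\setminus\{\mathbb{I}\}$ be a generating set, $G:=\mathrm{Cay}(\Gamma,S)$, and let $r\ge\max\{2^{n+1},5\}$ be an integer. Let $h\in S$ be an involution such that $\{\mathbb{I},h\}$ is an $r$-local $2$-separator of $G$, and suppose that $G$ has no $r$-local cutvertex. Then: (i) if $g\in S$ traverses $\{\mathbb{I},h\}$ symmetrically, then $g$ and $h$ commute; (ii) if $g\in S$ traverses $\{\mathbb{I},h\}$ antisymmetrically but not symmetrically, then $gh$ is an involution.
   Context: Generating sets are closed under inverses; $\mathrm{Cay}(\Gamma,S)$ is the simple graph on $\Gamma$ with edges $\{g,gs\}$. $a\equiv b$ means $a=b$ or $a=b^{-1}$; $\Gamma$ is nilpotent of class $\le n$ if $[g,h]_n=\mathbb{I}$ for all $g\not\equiv h$, where $[g,h]_1=gh^{-1}g^{-1}h$ and $[g,h]_n$ is the reduced form of $g[g,h]_{n-1}^{-1}g^{-1}[g,h]_{n-1}$. Ball $B_r(v)$: subgraph of all vertices and edges on closed walks of length $\le r$ through $v$; $v$ is an $r$-local cutvertex if $B_r(v)-v$ is disconnected. For $X=\{v_0,v_1\}$, $N(X)$ is the set of vertices outside $X$ adjacent to $X$; the connectivity graph $C_r(v_0,v_1)$ has vertex set $N(X)$, $a,b$ adjacent if for some $i$ they lie in the same component of $B_r(v_i)-v_0-v_1$; $X$ is an $r$-local $2$-separator if $C_r(v_0,v_1)$ is disconnected and $d_G(v_0,v_1)\le r/2$; the $r$-local components at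 $X$ are the components of $C_r(v_0,v_1)$. An element $g\in S$ traverses $X$ (at $x\in X$) if $xg^{-1}$ and $xg$ lie in distinct $r$-local components at $X$ for some (the given) $x\in X$. When $h$ is an involution and $g$ traverses $\{\mathbb{I},h\}$, $g$ traverses it symmetrically if $g^{-1}$ and $hg$ lie in distinct $r$-local components at $\{\mathbb{I},h\}$, and antisymmetrically if $g^{-1}$ and $hg^{-1}$ lie in distinct $r$-local components at $\{\mathbb{I},h\}$. *)

(* Defs.v *)
From mathcomp Require Import all_boot.
From Stdlib Require Import Relation_Operators.
Set Implicit Arguments.
Unset Strict Implicit.
Unset Printing Implicit Defensive.
Local Open Scope group_scope.

Section Cayley.
Variable Gm : groupType.
Implicit Types (S : Gm -> Prop) (x y a b g h v : Gm).

Fixpoint itcomm (n : nat) g h : Gm :=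
  match n with
  | 0 => h
  | n'.+1 => g * (itcomm n' g h)^-1 * g^-1 * itcomm n' g h
  end.

Definition nilpotent_le (n : nat) : Prop :=
  forall g h, ~ (g = h \/ g = h^-1) -> itcomm n g h = 1.

Definition involution h : Prop := h * h = 1 /\ h <> 1.

Definition inv_closed S : Prop := forall s, S s -> S s^-1.
Definition generates S : Prop :=
  forall g, exists l : seq Gm, (forall s, s \in l -> S s) /\ g = foldr (fun a b => a * b) 1 l.

Definition cay_adj S x y : Prop := S (x^-1 * y).

Fixpoint is_walk S x (l : seq Gm) : Prop :=
  match l with
  | [::] => True
  | y :: l' => cay_adj S x y /\ is_walk S y l'
  end.

Fixpoint edge_on x (l : seq Gm) a b : Prop :=
  match l with
  | [::] => False
  | y :: l' => ((a = x /\ b = y) \/ (a = y /\ b = x)) \/ edge_on y l' a b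
  end.

Definition closed_walk_through S (r : nat) v x (l : seq Gm) : Prop :=
  is_walk S x l /\ last x l = x /\ size l <= r /\ v \in x :: l.

(* vertices and edges of the ball B_r(v) *)
Definition ball_vert S r v a : Prop :=
  exists x l, closed_walk_through S r v x l /\ a \in x :: l.
Definition ball_edge S r v a b : Prop :=
  exists x l, closed_walk_through S r v x l /\ edge_on x l a b.

Definition same_comp S r v (D : Gm -> Prop) a b : Prop :=
  ball_vert S r v a /\ ~ D a /\ ball_vert S r v b /\ ~ D b /\
  clos_refl_trans Gm (fun c d => ball_edge S r v c d /\ ~ D c /\ ~ D d) a b.

Definition local_cutvertex S r v : Prop :=
  exists a b, ball_vert S r v a /\ a <> v /\ ball_vert S r v b /\ b <> v /\
    ~ same_comp S r v (fun c => c = v) a b.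

Definition nbX S v0 v1 a : Prop :=
  a <> v0 /\ a <> v1 /\ (cay_adj S v0 a \/ cay_adj S v1 a).

Definition conn_adj S r (v0 v1 : Gm) a b : Prop :=
  nbX S v0 v1 a /\ nbX S v0 v1 b /\
  (same_comp S r v0 (fun c => c = v0 \/ c = v1) a b \/
   same_comp S r v1 (fun c => c = v0 \/ c = v1) a b).

Definition conn_conn S r (v0 v1 : Gm) a b : Prop :=
  nbX S v0 v1 a /\ nbX S v0 v1 b /\ clos_refl_trans Gm (conn_adj S r v0 v1) a b.

Definition distinct_comps S r (v0 v1 : Gm) a b : Prop :=
  nbX S v0 v1 a /\ nbX S v0 v1 b /\ ~ conn_conn S r v0 v1 a b.

Definition dist_le_half S r (v0 v1 : Gm) : Prop :=
  exists l, is_walk S v0 l /\ last v0 l = v1 /\ 2 * size l <= r.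

Definition local_2sep S r (v0 v1 : Gm) : Prop :=
  v0 <> v1 /\ (exists a b, distinct_comps S r v0 v1 a b) /\ dist_le_half S r v0 v1.

Definition traverses S r (v0 v1 : Gm) g : Prop :=
  exists x, (x = v0 \/ x = v1) /\ distinct_comps S r v0 v1 (x * g^-1) (x * g).

Definition traverses_sym S r h g : Prop :=
  traverses S r 1 h g /\ distinct_comps S r 1 h g^-1 (h * g).
Definition traverses_antisym S r h g : Prop :=
  traverses S r 1 h g /\ distinct_comps S r 1 h g^-1 (h * g^-1).

End Cayley.

(* Main.v *)
Require Import Defs.
From mathcomp Require Import all_boot.
From mathcomp Require Import zify.
From Stdlib Require Import Relation_Operators Classical.
Set Implicit Arguments.
Unset Strict Implicit.
Unset Printing Implicit Defensive.
Local Open Scope group_scope.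


Fixpoint engl (k : nat) : seq bool :=
  match k with
  | 0 => [:: true; false]
  | k'.+1 => true :: rev (map negb (engl k')) ++ behead (engl k')
  end.

Definition step (s : seq bool) := true :: rev (map negb s) ++ behead s.

Lemma size_step s : (0 < size s)%N -> size (step s) = (2 * size s)%N.
Proof. move=> H; rewrite /step /= size_cat size_rev size_map size_behead; lia. Qed.

Lemma nth_step s p : (0 < size s)%N ->
  nth false (step s) p = if p == 0 then true else if (p <= size s)%N
    then ~~ nth false s (size s - p) else nth false s (p - size s).
Proof.
move=> Hs; case: p => [|p] //=.
rewrite nth_cat size_rev size_map.
case: ltnP => Hp.
- rewrite nth_rev ?size_map // (nth_map false); last by lia.
  by [].
- rewrite nth_behead.
  congr nth; lia.
Qed.

Definition alt3 (s : seq bool) j :=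
  [&& nth false s j != nth false s j.+1, nth false s j.+1 != nth false s j.+2
    & nth false s j.+2 != nth false s j.+3].

Definition Inv (s : seq bool) :=
  (4 <= size s)%N /\ nth false s 0 = true /\ nth false s 1 = true /\
  nth false s (size s).-1 = false /\ nth false s (size s).-2 = false /\
  ~~ (~~ nth false s 2 && nth false s 3) /\
  (forall j, (j + 3 < size s)%N -> ~~ alt3 s j).

Lemma Inv_step s : Inv s -> Inv (step s).
Proof.
move=> [H4 [H0 [H1 [Hl1 [Hl2 [H23 Hw]]]]]].
set m := size s in H4 Hl1 Hl2 Hw *.
have Hm : (0 < m)%N by lia.
have Hs : size (step s) = (2 * m)%N by rewrite size_step.
rewrite /Inv Hs !nth_step //=.
split; first lia.
split; first by [].
split; first by rewrite (_ : (1 <= m)%N = true) ?subn1 ?Hl1 //; lia.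
split.
  have -> : ((2 * m).-1 == 0) = false by lia.
  have -> : ((2 * m).-1 <= m)%N = false by lia.
  by rewrite -Hl1; congr nth; lia.
split.
  have -> : ((2 * m).-2 == 0) = false by lia.
  have -> : ((2 * m).-2 <= m)%N = false by lia.
  by rewrite -Hl2; congr nth; lia.
split.
  have -> : (2 <= m)%N = true by lia.
  have -> : (size s - 2 = (size s).-2)%N by lia.
  by rewrite Hl2.
move=> p Hp; rewrite /alt3 !nth_step //=.
case: (posnP p) => [->|Hp0] /=.
  by rewrite (_ : (1 <= m)%N = true) ?subn1 ?Hl1 //; lia.
rewrite -/m.
case: (leqP (p.+3) m) => Hb.
  have -> : (p <= m)%N = true by lia.
  have -> : (p.+1 <= m)%N = true by lia.
  have -> : (p.+2 <= m)%N = true by lia.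
  set q := (m - p.+3)%N.
  have -> : (m - p = q.+3)%N by lia.
  have -> : (m - p.+1 = q.+2)%N by lia.
  have -> : (m - p.+2 = q.+1)%N by lia.
  have := Hw q ltac:(lia); rewrite /alt3.
  by case: (nth false s q); case: (nth false s q.+1); case: (nth false s q.+2);
     case: (nth false s q.+3).
case: (leqP p m) => Hc.
  case: (ltnP p.+1 m) => Hd.
  - (* p = m - 2 *)
    have -> : (m - p.+1 = 1)%N by lia.
    have -> : (m - p.+2 = 0)%N by lia.
    have -> : (p < m)%N = true by lia.
    by rewrite H0 H1 /= andbF.
  - case: (ltnP p m) => He.
    + (* p = m - 1 *)
      have -> : (m - p = 1)%N by lia.
      have -> : (m - p.+1 = 0)%N by lia.
      by rewrite H0 H1.
    +
      have Ep : p = m by lia.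
      subst p.
      have -> : (m.+1 - m = 1)%N by lia.
      have -> : (m.+2 - m = 2)%N by lia.
      have -> : (m.+3 - m = 3)%N by lia.
      rewrite subnn H0 H1 /=.
      by move: H23; case: (nth false s 2); case: (nth false s 3).
have -> : (p.+1 <= m)%N = false by lia.
have -> : (p.+2 <= m)%N = false by lia.
have := Hw (p - m)%N ltac:(lia); rewrite /alt3.
have -> : (p.+1 - m = (p - m).+1)%N by lia.
have -> : (p.+2 - m = (p - m).+2)%N by lia.
by have -> : (p.+3 - m = (p - m).+3)%N by lia.
Qed.

Lemma Inv_engl k : (1 <= k)%N -> Inv (engl k).
Proof.
case: k => [//|k] _; elim: k => [|k IH].
- split; first by [].
  do 5 (split; first by []).
  move=> j Hj; have -> : j = 0 by rewrite /= in Hj; lia.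
  by [].
- exact: (Inv_step IH).
Qed.

Lemma size_engl k : size (engl k) = (2 ^ k.+1)%N.
Proof.
elim: k => [//|k IH].
rewrite (size_step (s := engl k)); last by rewrite IH expn_gt0.
by rewrite IH -expnS.
Qed.

Section Walks.
Variable Gm : groupType.
Variable S : Gm -> Prop.
Variable r : nat.
Variable h : Gm.
Hypothesis invS : inv_closed S.
Hypothesis Sh : S h.
Hypothesis hh : h * h = 1.

Lemma hinv : h^-1 = h.
Proof. by rewrite -[h^-1]mulg1 -hh mulgA mulVg mul1g. Qed.

Lemma adj_sym x y : cay_adj S x y -> cay_adj S y x.
Proof. rewrite /cay_adj => H; have := invS H. by rewrite invgM invgK. Qed.

Lemma adj_trans c x y : cay_adj S x y -> cay_adj S (c * x) (c * y).
Proof. by rewrite /cay_adj invgM -mulgA (mulgA c^-1) mulVg mul1g. Qed.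

Lemma is_walk_cat (x : Gm) (s1 s2 : seq Gm) :
  is_walk S x (s1 ++ s2) <-> is_walk S x s1 /\ is_walk S (last x s1) s2.
Proof.
elim: s1 x => [|y s1 IH] x /=; first by split => // [[]].
rewrite IH; tauto.
Qed.

Lemma is_walk_map (c x : Gm) (l : seq Gm) : is_walk S x l -> is_walk S (c * x) (map (fun u => c * u) l).
Proof.
elim: l x => [|y l IH] x //= [H1 H2]; split; [exact: adj_trans | exact: IH].
Qed.

Lemma edge_on_catl (x : Gm) (s1 s2 : seq Gm) (a b : Gm) : edge_on x s1 a b -> edge_on x (s1 ++ s2) a b.
Proof. elim: s1 x => [|y s1 IH] x //= [H|H]; [by left | right; exact: IH]. Qed.

Lemma edge_on_sym (x : Gm) (l : seq Gm) (a b : Gm) : edge_on x l a b -> edge_on x l b a.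
Proof. elim: l x => [|y l IH] x //= [H|H]; [left; tauto | right; exact: IH]. Qed.

Lemma ball_edge_sym (v a b : Gm) : ball_edge S r v a b -> ball_edge S r v b a.
Proof. move=> [x [l [H1 H2]]]; exists x, l; split => //; exact: edge_on_sym. Qed.

Lemma crt_sym (R : Gm -> Gm -> Prop) : (forall a b, R a b -> R b a) ->
  forall a b, clos_refl_trans Gm R a b -> clos_refl_trans Gm R b a.
Proof.
move=> Rs a b; elim => [x y /Rs H|x|x y z _ H1 _ H2].
- exact: rt_step.
- exact: rt_refl.
- exact: rt_trans H2 H1.
Qed.

Lemma same_comp_sym (v : Gm) D (a b : Gm) : same_comp S r v D a b -> same_comp S r v D b a.
Proof.
move=> [H1 [H2 [H3 [H4 H5]]]]; do 4 (split => //).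
apply: crt_sym H5 => c d [E [F G]]; split; [exact: ball_edge_sym | tauto].
Qed.

Lemma conn_adj_sym a b : conn_adj S r 1 h a b -> conn_adj S r 1 h b a.
Proof.
move=> [H1 [H2 [H3|H3]]]; do 2 (split => //); [left|right]; exact: same_comp_sym.
Qed.

Lemma conn_conn_sym a b : conn_conn S r 1 h a b -> conn_conn S r 1 h b a.
Proof.
move=> [H1 [H2 H3]]; do 2 (split => //); exact: crt_sym conn_adj_sym _ _ H3.
Qed.

Lemma conn_conn_trans a b c : conn_conn S r 1 h a b -> conn_conn S r 1 h b c ->
  conn_conn S r 1 h a c.
Proof. move=> [H1 [H2 H3]] [H4 [H5 H6]]; do 2 (split => //); exact: rt_trans H6. Qed.

Lemma crt_path (v : Gm) (D : Gm -> Prop) (x0 : Gm) (l : seq Gm) (p : Gm) (M : seq Gm) :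
  closed_walk_through S r v x0 l ->
  (forall a b, edge_on p M a b -> edge_on x0 l a b) ->
  (forall u, u \in p :: M -> u \in x0 :: l) ->
  (forall u, u \in p :: M -> ~ D u) ->
  clos_refl_trans Gm (fun c d => ball_edge S r v c d /\ ~ D c /\ ~ D d) p (last p M).
Proof.
move=> CW; elim: M p => [|q M IH] p Hedge Hmem HD /=; first exact: rt_refl.
apply: rt_trans (IH q _ _ _); last 3 first.
- by move=> a b E; apply: Hedge => /=; right.
- by move=> u Hu; apply: Hmem; rewrite inE Hu orbT.
- by move=> u Hu; apply: HD; rewrite inE Hu orbT.
apply: rt_step; split; last split.
- exists x0, l; split => //; apply: Hedge => /=; left; left; tauto.
- by apply: HD; rewrite inE eqxx.
- by apply: HD; rewrite !inE eqxx orbT.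
Qed.


Lemma xinv (x : Gm) : x = 1 \/ x = h -> x^-1 = x.
Proof. by case=> ->; [rewrite invg1 | exact: hinv]. Qed.

Lemma CL (a b x' x1 : Gm) (M : seq Gm) :
  is_walk S a (x1 :: M ++ [:: b]) ->
  b = a \/ b = a * h ->
  (forall u, u \in x1 :: M -> u <> a /\ u <> a * h) ->
  (size M + 3 <= r)%N ->
  x' = 1 \/ x' = h ->
  conn_conn S r 1 h (x' * a^-1 * x1) (x' * a^-1 * last x1 M).
Proof.
move=> Hw Hb Hav Hr Hx.
set c := x' * a^-1.
have ca : c * a = x' by rewrite /c -mulgA mulVg mulg1.
have cb : c * b = x' \/ c * b = x' * h.
  by case: Hb => ->; [left; exact: ca | right; rewrite mulgA ca].
have Dc : forall u, u \in x1 :: M -> c * u <> 1 /\ c * u <> h.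
  move=> u Hu; have [Ha Hah] := Hav u Hu.
  have Eu : u = c^-1 * (c * u) by rewrite mulgA mulVg mul1g.
  have ci : c^-1 = a * x' by rewrite /c invgM invgK xinv.
  split => E; rewrite E ci in Eu.
  - case: Hx Eu => -> Eu; [apply: Ha | apply: Hah]; by rewrite Eu ?mulg1.
  - case: Hx Eu => -> Eu; [apply: Hah | apply: Ha]; by rewrite Eu ?mulg1 // -mulgA hh mulg1.
set W := map (fun u => c * u) (x1 :: M ++ [:: b]) ++
          (if c * b == x' then [::] else [:: x']).
have LW : last x' (map (fun u => c * u) (x1 :: M ++ [:: b])) = c * b.
  by rewrite /= last_map last_cat.
have CW : closed_walk_through S r x' x' W.
  split; last split; last split.
  - rewrite /W is_walk_cat; split; first by rewrite -ca; exact: is_walk_map.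
    rewrite LW.
    case: eqP => // Hne; case: cb => // ->; split => //.
    by rewrite /cay_adj invgM -mulgA mulVg mulg1 hinv.
  - rewrite /W last_cat LW.
    by case: eqP => //.
  - rewrite /W size_cat size_map /= size_cat /=.
    case: eqP => _ /=; lia.
  - exact: mem_head.
have Wdef : W = c * x1 :: (map (fun u => c * u) M ++
               ([:: c * b] ++ (if c * b == x' then [::] else [:: x']))).
  by rewrite /W /= map_cat -catA.
have memW : forall u, u \in x1 :: M -> c * u \in x' :: W.
  move=> u Hu; rewrite Wdef !inE; move: Hu; rewrite inE => /orP [/eqP -> | Hu].
  - by rewrite eqxx orbT.
  - by rewrite mem_cat (map_f (fun u => c * u) Hu) !orbT.
have SC : same_comp S r x' (fun u => u = 1 \/ u = h) (c * x1) (c * last x1 M).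
  have h1 : x1 \in x1 :: M := mem_head _ _.
  have hl : last x1 M \in x1 :: M := mem_last _ _.
  split; first by exists x', W; split => //; exact: memW.
  split; first by have := Dc _ h1; tauto.
  split; first by exists x', W; split => //; exact: memW.
  split; first by have := Dc _ hl; tauto.
  rewrite -(last_map (fun u => c * u)).
  apply: (crt_path CW).
  - move=> a0 b0 E; rewrite Wdef /=; right; exact: edge_on_catl.
  - move=> u; rewrite -map_cons => /mapP [w Hw' ->]; exact: memW.
  - move=> u; rewrite -map_cons => /mapP [w Hw' ->]; have := Dc _ Hw'; tauto.
have adjx : x' = 1 \/ x' = h -> forall u, cay_adj S x' u -> cay_adj S 1 u \/ cay_adj S h u.
  by move=> [] -> ?; [left|right].
have Hw1 : cay_adj S a x1 by case: Hw.
have Hwl : cay_adj S (last x1 M) b.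
  move: Hw; rewrite -cat_cons is_walk_cat => [[_]] /=; tauto.
have nb1 : nbX S 1 h (c * x1).
  have := Dc _ (mem_head _ _); move=> [? ?]; do 2 (split => //).
  by apply: adjx => //; rewrite -ca; exact: adj_trans.
have nb2 : nbX S 1 h (c * last x1 M).
  have := Dc _ (mem_last _ _); move=> [? ?]; do 2 (split => //).
  have := adj_trans c (adj_sym Hwl).
  by case: Hx cb => -> [] ->; rewrite ?mul1g ?hh => H; [left|right|right|left].
split => //; split => //; apply: rt_step; split => //; split => //.
by case: Hx SC => -> SC; [left|right].
Qed.

Lemma CL2 (a b x' : Gm) (P : seq Gm) :
  P <> [::] ->
  is_walk S a (P ++ [:: b]) ->
  b = a \/ b = a * h ->
  (forall u, u \in P -> u <> a /\ u <> a * h) ->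
  (size P + 2 <= r)%N ->
  x' = 1 \/ x' = h ->
  conn_conn S r 1 h (x' * a^-1 * head a P) (x' * a^-1 * last a P).
Proof.
case: P => [//|x1 M] _ Hw Hb Hav Hr Hx /=.
apply: (@CL a b) => //; rewrite /= in Hr; lia.
Qed.

Definition rung (u w : Gm) := w = u \/ w = u * h.

Lemma rung_sym u w : rung u w -> rung w u.
Proof. by case=> ->; [left | right; rewrite -mulgA hh mulg1]. Qed.

Lemma rung_trans u v w : rung u v -> rung v w -> rung u w.
Proof.
by case=> -> [] ->; [left | right | right | left; rewrite -mulgA hh mulg1].
Qed.

Lemma not_rung_avoid u w x : ~ rung u w -> x = w \/ x = w * h -> x <> u /\ x <> u * h.
Proof.
move=> NR [] ->; split=> E; apply: NR; rewrite /rung.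
- by left.
- by right.
- by right; rewrite -E -mulgA hh mulg1.
- by left; apply: (mulIg h).
Qed.

Variable g : Gm.
Hypothesis Sg : S g.

Definition gp (b : bool) := if b then g else g^-1.

Lemma Sgp b : S (gp b).
Proof. by case: b => /=; [ | apply: invS]. Qed.

Fixpoint vv (e : seq bool) (l : nat) : Gm :=
  match l with 0 => 1 | l'.+1 => vv e l' * gp (nth false e l') * h end.

Fixpoint segv (e : seq bool) (i n : nat) : seq Gm :=
  match n with
  | 0 => [::]
  | n'.+1 => vv e i.+1 * h :: vv e i.+1 :: segv e i.+1 n'
  end.

Lemma vvh e i : vv e i.+1 * h = vv e i * gp (nth false e i).
Proof. by rewrite /= -mulgA hh mulg1. Qed.

Lemma adj_vv e i : cay_adj S (vv e i) (vv e i.+1 * h).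
Proof. rewrite vvh /cay_adj mulKg; exact: Sgp. Qed.

Lemma adj_h u : cay_adj S (u * h) u.
Proof. by rewrite /cay_adj invgM -mulgA mulVg mulg1 hinv. Qed.

Lemma walk_segv e i n : is_walk S (vv e i) (segv e i n).
Proof.
elim: n i => [|n IH] i //=; split; first exact: adj_vv.
split; [exact: adj_h | exact: IH].
Qed.

Lemma last_segv e i n : last (vv e i) (segv e i n) = vv e (i + n).
Proof.
elim: n i => [|n IH] i; first by rewrite addn0.
change (last (vv e i.+1) (segv e i.+1 n) = vv e (i + n.+1)).
by rewrite IH addSnnS.
Qed.

Lemma size_segv e i n : size (segv e i n) = (2 * n)%N.
Proof. elim: n i => [|n IH] i //=; rewrite IH; lia. Qed.

Lemma mem_segv e i n u : u \in segv e i n ->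
  exists l, (i < l <= i + n)%N /\ (u = vv e l \/ u = vv e l * h).
Proof.
elim: n i => [|n IH] i //=; rewrite !inE => /orP [/eqP ->|/orP [/eqP ->|H]].
- exists i.+1; split; [lia | by right].
- exists i.+1; split; [lia | by left].
- have [l [Hl Hu]] := IH _ H; exists l; split => //; lia.
Qed.

Lemma min_pair (P : nat -> nat -> Prop) :
  (exists j d, P j d) -> exists j d, P j d /\ forall j' d', (d' < d)%N -> ~ P j' d'.
Proof.
move=> [j0 [d0 H0]].
suff: forall N j d, (d <= N)%N -> P j d ->
  exists j d, P j d /\ forall j' d', (d' < d)%N -> ~ P j' d'.
  by move=> H; apply: (H d0 j0 d0 (leqnn _) H0).
elim=> [|N IH] j d Hd HP.
- exists j, d; split => // j' d' Hd'; lia.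
- case: (classic (exists j' d', (d' < d)%N /\ P j' d')) => [[j' [d' [Hlt HP']]]|Hno].
  + apply: (IH j' d') => //; lia.
  + exists j, d; split => // j' d' Hlt HP'; apply: Hno; eauto.
Qed.

Hypothesis g1 : g <> 1.
Hypothesis gnh : g <> h.

Lemma inv_mul_l (u w z : Gm) : u = w * z -> u^-1 * w = z^-1.
Proof. by move=> ->; rewrite invgM -mulgA mulVg mulg1. Qed.

Lemma vv_pred e i : (0 < i)%N -> vv e i = vv e i.-1 * (gp (nth false e i.-1) * h).
Proof. by case: i => // i _ /=; rewrite mulgA. Qed.

Lemma walk_segh e i n : is_walk S (vv e i) (segv e i n ++ [:: vv e (i + n).+1 * h]).
Proof.
rewrite is_walk_cat last_segv; split; first exact: walk_segv.
split => //; exact: adj_vv.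
Qed.

Lemma MIN (e : seq bool) :
  vv e (size e) = 1 -> (0 < size e)%N -> (2 * size e <= r)%N ->
  exists j k, [/\ (j < k <= size e)%N /\ (2 <= k - j)%N, rung (vv e j) (vv e k),
    (forall i, (j < i < k)%N -> forall x', x' = 1 \/ x' = h ->
        conn_conn S r 1 h (x' * gp (nth false e i)) (x' * h * (gp (nth false e i.-1))^-1)),
    (vv e k = vv e j -> forall x', x' = 1 \/ x' = h ->
        conn_conn S r 1 h (x' * gp (nth false e j)) (x' * h * (gp (nth false e k.-1))^-1)) &
    (vv e k = vv e j * h -> forall x', x' = 1 \/ x' = h ->
        conn_conn S r 1 h (x' * gp (nth false e j)) (x' * (gp (nth false e k.-1))^-1))].
Proof.
move=> Hcl Hm Hr.
set m := size e in Hcl Hm Hr *.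
have [j [d [[Hd0 [Hjd Hrung]] Hmin]]] :=
  min_pair (P := fun j d => (0 < d)%N /\ (j + d <= m)%N /\ rung (vv e j) (vv e (j + d)))
   (ex_intro _ 0 (ex_intro _ m (conj Hm (conj (leqnn _) (or_introl Hcl))))).
have NR : forall l1 l2, (l1 < l2 <= m)%N -> (l2 - l1 < d)%N -> ~ rung (vv e l1) (vv e l2).
  move=> l1 l2 Hl Hd HR; apply: (Hmin l1 (l2 - l1) Hd).
  have -> : (l1 + (l2 - l1) = l2)%N by lia.
  split; [lia | split => //; lia].
have Hd2 : (2 <= d)%N.
  case: d Hd0 Hjd Hrung {Hmin NR} => [//|[|d]] _ Hjd Hrung; last by [].
  exfalso; move: Hrung; rewrite addn1 /= -!mulgA /rung => [[]] E.
  - have : gp (nth false e j) * h = 1 by apply: (mulgI (vv e j)); rewrite mulg1; exact: E.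
    move/mulg1_eq => E2; have : gp (nth false e j) = h.
      by rewrite -(invgK (gp _)) E2 hinv.
    by case: (nth false e j) => /= E3; apply: gnh; [exact: E3 | rewrite -(invgK g) E3 hinv].
  - have : gp (nth false e j) * h = h by apply: (mulgI (vv e j)); exact: E.
    move=> E2; have : gp (nth false e j) = 1.
      by apply: (mulIg h); rewrite mul1g.
    by case: (nth false e j) => /= E3; apply: g1; [exact: E3 | rewrite -(invgK g) E3 invg1].
set k := (j + d)%N in Hjd Hrung.
exists j, k; split.
- split; lia.
- exact: Hrung.
- move=> i Hi x' Hx.
  have Rk : forall l, (i < l <= k)%N -> ~ rung (vv e i) (vv e l).
    move=> l Hl HR.
    case: (ltnP l k) => Hlk.
    + by apply: (NR i l); [lia | lia | ].
    + have Elk : l = k by lia.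
      subst l; apply: (NR j i); [lia | lia | ].
      exact: rung_trans Hrung (rung_sym HR).
  have IP : forall A, A <> [::] -> is_walk S (vv e i) A -> last (vv e i) A = vv e j ->
      head (vv e i) A = vv e i.+1 * h ->
      (forall u, u \in A -> u <> vv e i /\ u <> vv e i * h) -> (size A <= 2 * (k - i))%N ->
      conn_conn S r 1 h (x' * gp (nth false e i)) (x' * h * (gp (nth false e i.-1))^-1).
    move=> A HA HwA HlA HhA HavA HsA.
    have := @CL2 (vv e i) (vv e i * h) x' (A ++ segv e j (i - j).-1).
    have Hi0 : (0 < i)%N by lia.
    have Ej : (j + (i - j).-1 = i.-1)%N by lia.
    rewrite last_cat HlA last_segv Ej.
    have -> : head (vv e i) (A ++ segv e j (i - j).-1) = head (vv e i) A.
      by case: (A) HA.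
    rewrite HhA vvh [X in conn_conn _ _ _ _ X _]mulgA mulgVK.
    rewrite -[X in conn_conn _ _ _ _ _ X]mulgA (inv_mul_l (vv_pred e Hi0)) invgM hinv mulgA.
    apply => //.
    + by case: (A) HA.
    + rewrite -catA !is_walk_cat; split => //; rewrite HlA; split; first exact: walk_segv.
      rewrite last_segv Ej /=; split => //.
      by rewrite -{2}(prednK Hi0); exact: adj_vv.
    + by right.
    + move=> u; rewrite mem_cat => /orP [Hu|Hu]; first exact: HavA.
      have [l [Hl Hul]] := mem_segv Hu.
      apply: (not_rung_avoid _ Hul) => HR.
      by apply: (NR l i); [lia | lia | exact: rung_sym].
    + rewrite size_cat size_segv; lia.
  case: Hrung => Ek.
  + apply: (IP (segv e i (k - i))).
    * by have -> : (k - i = (k - i).-1.+1)%N by lia.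
    * exact: walk_segv.
    * by rewrite last_segv; have -> : (i + (k - i) = k)%N by lia.
    * by have -> : (k - i = (k - i).-1.+1)%N by lia.
    * move=> u /mem_segv [l [Hl Hul]]; apply: (not_rung_avoid _ Hul); apply: Rk; lia.
    * by rewrite size_segv.
  + have Ek1 : ((i + (k - i).-1).+1 = k)%N by lia.
    apply: (IP (segv e i (k - i).-1 ++ [:: vv e k * h])).
    * by case: (segv _ _ _).
    * by have := walk_segh e i (k - i).-1; rewrite Ek1.
    * by rewrite last_cat /= Ek -mulgA hh mulg1.
    * case E : (k - i).-1 => [|n] /=; last by [].
      by have -> : k = i.+1 by lia.
    * move=> u; rewrite mem_cat => /orP [/mem_segv [l [Hl Hul]]|].
      - apply: (not_rung_avoid _ Hul); apply: Rk; lia.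
      - rewrite inE => /eqP ->; apply: (not_rung_avoid (w := vv e k)); last by right.
        apply: Rk; lia.
    * rewrite size_cat size_segv /=; lia.
- move=> Ek x' Hx.
  have Hk0 : (0 < k)%N by lia.
  have := @CL2 (vv e j) (vv e k * h) x' (segv e j d.-1).
  have Ej : (j + d.-1 = k.-1)%N by lia.
  rewrite last_segv Ej.
  have -> : head (vv e j) (segv e j d.-1) = vv e j.+1 * h.
    by have -> : d.-1 = d.-2.+1 by lia.
  rewrite vvh [X in conn_conn _ _ _ _ X _]mulgA mulgVK.
  have Ej2 : vv e j = vv e k.-1 * (gp (nth false e k.-1) * h).
    by rewrite -Ek; exact: vv_pred.
  rewrite -[X in conn_conn _ _ _ _ _ X]mulgA (inv_mul_l Ej2) invgM hinv mulgA.
  apply => //.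
  + by have -> : d.-1 = d.-2.+1 by lia.
  + by have := walk_segh e j d.-1; rewrite Ej prednK.
  + by right; rewrite Ek.
  + move=> u /mem_segv [l [Hl Hul]]; apply: (not_rung_avoid _ Hul).
    apply: (NR j l); lia.
  + rewrite size_segv; lia.
- move=> Ek x' Hx.
  have Hk0 : (0 < k)%N by lia.
  have := @CL2 (vv e j) (vv e k * h) x' (segv e j d.-1).
  have Ej : (j + d.-1 = k.-1)%N by lia.
  rewrite last_segv Ej.
  have -> : head (vv e j) (segv e j d.-1) = vv e j.+1 * h.
    by have -> : d.-1 = d.-2.+1 by lia.
  rewrite vvh [X in conn_conn _ _ _ _ X _]mulgA mulgVK.
  have Ej2 : vv e j = vv e k.-1 * gp (nth false e k.-1).
    by rewrite -(prednK Hk0) -vvh (prednK Hk0) Ek -mulgA hh mulg1.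
  rewrite -[X in conn_conn _ _ _ _ _ X]mulgA (inv_mul_l Ej2).
  apply => //.
  + by have -> : d.-1 = d.-2.+1 by lia.
  + by have := walk_segh e j d.-1; rewrite Ej prednK.
  + by left; rewrite Ek -mulgA hh mulg1.
  + move=> u /mem_segv [l [Hl Hul]]; apply: (not_rung_avoid _ Hul).
    apply: (NR j l); lia.
  + rewrite size_segv; lia.
Qed.

Definition wprod (e : seq bool) : Gm := foldr (fun b acc => gp b * h * acc) 1 e.

Lemma wprod_cat s1 s2 : wprod (s1 ++ s2) = wprod s1 * wprod s2.
Proof. elim: s1 => [|b s1 IH] /=; first by rewrite mul1g. by rewrite IH !mulgA. Qed.

Lemma vv_wprod e : vv e (size e) = wprod e.
Proof.
suff: forall l, (l <= size e)%N -> vv e l = wprod (take l e).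
  by move/(_ (size e) (leqnn _)); rewrite take_size.
elim=> [|l IH] Hl; first by rewrite take0.
rewrite (take_nth false Hl) -cats1 wprod_cat /= IH; last by lia.
by rewrite mulg1 !mulgA.
Qed.

Lemma conj_exp (x : Gm) N : h * x ^+ N * h = (h * x * h) ^+ N.
Proof.
elim: N => [|N IH]; first by rewrite expg0 mulg1 hh.
rewrite !expgS -IH.
by rewrite !mulgA -(mulgA (h * x) h h) hh mulg1.
Qed.

Definition tp := h * g^-1 * h * g.

Lemma itcomm_hg k : itcomm k.+1 h g = tp ^+ (2 ^ k).
Proof.
elim: k => [|k IH]; first by rewrite /= expg1 hinv /tp.
change (h * (itcomm k.+1 h g)^-1 * h^-1 * itcomm k.+1 h g = tp ^+ (2 ^ k.+1)); rewrite IH.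
have E : h * (tp ^+ (2 ^ k))^-1 * h^-1 = tp ^+ (2 ^ k).
  rewrite hinv -expVgn conj_exp; congr (_ ^+ _).
  by rewrite /tp !invgM !invgK hinv !mulgA -(mulgA _ h h) hh mulg1.
by rewrite E -expgnDr expnS mul2n -addnn.
Qed.

Definition ealt N := flatten (nseq N [:: false; true]).

Lemma size_ealt N : size (ealt N) = (2 * N)%N.
Proof. elim: N => [|N IH] //=; rewrite IH; lia. Qed.

Lemma nth_ealt N i : nth false (ealt N) i = if (i < 2 * N)%N then odd i else false.
Proof.
elim: N i => [|N IH] [|[|i]] //=.
- by have -> : (1 < 2 * N.+1)%N = true by lia.
- rewrite (IH i) negbK; congr (if _ then _ else _); lia.
Qed.

Lemma wprod_ealt N : wprod (ealt N) = (g^-1 * h * g * h) ^+ N.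
Proof.
elim: N => [|N IH]; first by rewrite expg0.
rewrite expgS -IH /=. by rewrite !mulgA.
Qed.

Lemma part_ii n : (1 <= n)%N -> itcomm n h g = 1 -> (2 ^ (n + 1) <= r)%N -> h <> 1 ->
  ~ conn_conn S r 1 h g^-1 (h * g^-1) -> False.
Proof.
move=> Hn Hc Hr h1 Hanti.
set N := (2 ^ n.-1)%N.
set e := ealt N.
have Hs : size e = (2 ^ n)%N by rewrite /e size_ealt /N -expnS prednK.
have Hcl : vv e (size e) = 1.
  rewrite vv_wprod /e wprod_ealt.
  have -> : g^-1 * h * g * h = h * tp * h.
    by rewrite /tp !mulgA hh mul1g.
  rewrite -conj_exp /N -itcomm_hg prednK // Hc mulg1 hh //.
have H0 : (0 < size e)%N by rewrite Hs expn_gt0.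
have H2 : (2 * size e <= r)%N by rewrite Hs; move: Hr; rewrite addn1 expnS.
have [j [k [[Hjk Hd] Hrung Hint Hm1 Hm2]]] := MIN Hcl H0 H2.
have He : forall i, (i < k)%N -> nth false e i = odd i.
  move=> i Hi; rewrite /e nth_ealt; have -> : (i < 2 * N)%N = true; last by [].
  have HkN : (k <= 2 * N)%N by rewrite -size_ealt; case/andP: Hjk.
  apply/idP; lia.
have Hint' : forall i, (j < i < k)%N -> ~~ odd i -> False.
  move=> i Hi Hodd; apply: Hanti.
  have := Hint i Hi 1 (or_introl erefl).
  rewrite !mul1g !He; try lia.
  have -> : odd i.-1 = true.
    by case: i Hi Hodd => [|i] //= _ /negPn.
  by rewrite (negbTE Hodd).
case Oj : (odd j.+1).
- case: (ltnP (j.+2) k) => Hk.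
  + apply: (Hint' j.+2); [lia | by rewrite -[odd _]/(~~ odd j.+1) Oj].
  + have Ek : k = j.+2 by lia.
    have Ej : odd j = false by move: Oj => /=; case: (odd j).
    case: Hrung => Er.
    * apply: Hanti; have := Hm1 Er 1 (or_introl erefl).
      by rewrite !mul1g !He ?Ek //= ?Ej ?Oj //= -?Ek //; lia.
    * exfalso; move: Er; rewrite Ek /= !He ?Ek //= ?Ej ?Oj //=.
      rewrite -!mulgA => /mulgI E2.
      have E3 : g^-1 * (h * g) = 1 by apply: (mulIg h); rewrite mul1g -[RHS]E2 !mulgA.
      have E4 := mulg1_eq E3; rewrite invgK in E4.
      by apply: h1; apply: (mulIg g); rewrite mul1g.
- apply: (Hint' j.+1); [lia | by rewrite Oj].
Qed.

Lemma wprod_cons b s : wprod (b :: s) = gp b * h * wprod s.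
Proof. by []. Qed.

Lemma gp_neg b : gp (~~ b) = (gp b)^-1.
Proof. by case: b => /=; rewrite ?invgK. Qed.

Lemma wprod_rev e : wprod (rev (map negb e)) = h * (wprod e)^-1 * h.
Proof.
elim: e => [|b e IH] /=; first by rewrite invg1 mulg1 hh.
rewrite rev_cons -cats1 wprod_cat IH /= gp_neg mulg1 !invgM hinv.
by rewrite !mulgA.
Qed.

Lemma wprod_engl k : wprod (engl k) = itcomm k.+1 g h.
Proof.
elim: k => [|k IH].
  by rewrite /= mulg1 hinv !mulgA.
have [e' Ee] : exists e', engl k = true :: e' by case: (k) => [|k']; eexists.
change (wprod (true :: rev (map negb (engl k)) ++ behead (engl k)) =
        g * (itcomm k.+1 g h)^-1 * g^-1 * itcomm k.+1 g h).
rewrite -IH wprod_cons wprod_cat wprod_rev Ee [behead _]/= !wprod_cons !invgM hinv !mulgA.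
rewrite -(mulgA g h h) hh mulg1 mulgVK.
by [].
Qed.

Lemma comm_from (y : Gm) : y * (h * (y^-1 * h)) = 1 -> y * h = h * y.
Proof.
move=> E.
have E1 : y * h * y^-1 = h.
  by apply: (mulIg h); rewrite hh -E !mulgA.
by rewrite -{2}E1 mulgVK.
Qed.

Lemma part_i n : (2 <= n)%N -> itcomm n g h = 1 -> (2 ^ (n + 1) <= r)%N -> h <> 1 ->
  ~ conn_conn S r 1 h g^-1 (h * g) ->
  (exists x, (x = 1 \/ x = h) /\ ~ conn_conn S r 1 h (x * g^-1) (x * g)) ->
  g * h = h * g.
Proof.
move=> Hn Hc Hr h1 Hsym [x [Hx Htr]].
set e := engl n.-1.
have Hs : size e = (2 ^ n)%N by rewrite /e size_engl prednK //; lia.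
have Hcl : vv e (size e) = 1 by rewrite vv_wprod /e wprod_engl prednK //; lia.
have H0 : (0 < size e)%N by rewrite Hs expn_gt0.
have H2 : (2 * size e <= r)%N by rewrite Hs; move: Hr; rewrite addn1 expnS.
have [j [kk [[Hjk Hd] Hrung Hint Hm1 Hm2]]] := MIN Hcl H0 H2.
have HI : forall i, (j < i < kk)%N -> nth false e i != nth false e i.-1.
  move=> i Hi; apply/negP => /eqP Eq.
  case Ei : (nth false e i) Eq => Eq.
  - apply: Hsym; apply: conn_conn_sym.
    have := Hint i Hi h (or_intror erefl).
    by rewrite -Eq Ei /= hh mul1g.
  - apply: Hsym.
    have := Hint i Hi 1 (or_introl erefl).
    by rewrite -Eq Ei /= !mul1g invgK.
have HM : nth false e j != nth false e kk.-1.
  apply/negP => /eqP Eq.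
  case: Hrung => Er.
  - have := Hm1 Er.
    case Ej : (nth false e j) Eq => Eq.
    + move/(_ h (or_intror erefl)); rewrite -Eq /= hh mul1g => C.
      by apply: Hsym; apply: conn_conn_sym.
    + move/(_ 1 (or_introl erefl)); rewrite -Eq /= !mul1g invgK => C.
      by apply: Hsym.
  - have := Hm2 Er x Hx.
    case Ej : (nth false e j) Eq => Eq; rewrite -Eq /=.
    + by move=> C; apply: Htr; apply: conn_conn_sym.
    + by rewrite invgK.
case: (ltnP (j.+2) kk) => Hk.
- case: (ltnP (j.+3) kk) => Hk3.
  + have HW := (proj2 (proj2 (proj2 (proj2 (proj2 (proj2 (Inv_engl (k := n.-1) ltac:(lia)))))))) j.
    move: HW; rewrite -/e => HW.
    have := HW ltac:(lia).
    rewrite /alt3.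
    have := HI j.+1 ltac:(lia); have := HI j.+2 ltac:(lia); have := HI j.+3 ltac:(lia).
    rewrite /=.
    by case: (nth false e j); case: (nth false e j.+1); case: (nth false e j.+2);
       case: (nth false e j.+3).
  + have Ek : kk = j.+3 by lia.
    move: HM; rewrite Ek /=.
    have := HI j.+1 ltac:(lia); have := HI j.+2 ltac:(lia).
    rewrite /=.
    by case: (nth false e j); case: (nth false e j.+1); case: (nth false e j.+2).
- have Ek : kk = j.+2 by lia.
  have Hn1 := HI j.+1 ltac:(lia); rewrite /= in Hn1.
  have Eneg : nth false e j.+1 = ~~ nth false e j.
    by move: Hn1; case: (nth false e j.+1); case: (nth false e j).
  move: Hrung; rewrite Ek /rung /= Eneg gp_neg -!mulgA.
  case=> E0.
  + have E : gp (nth false e j) * (h * ((gp (nth false e j))^-1 * h)) = 1.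
      by apply: (mulgI (vv e j)); rewrite mulg1.
    have := comm_from E.
    case: (nth false e j) => //= E2.
    have : g * (g^-1 * h) * g = g * (h * g^-1) * g by rewrite E2.
    by rewrite mulVKg mulgA mulgVK => E3; rewrite E3.
  + exfalso; apply: h1.
    have E : gp (nth false e j) * (h * ((gp (nth false e j))^-1 * h)) = h.
      by apply: (mulgI (vv e j)).
    have E3 : gp (nth false e j) * (h * (gp (nth false e j))^-1) = 1.
      by apply: (mulIg h); rewrite mul1g -[RHS]E !mulgA.
    have E4 := mulg1_eq E3.
    apply: (mulIg (gp (nth false e j))^-1).
    by rewrite mul1g -E4.
Qed.

End Walks.

Unset Implicit Arguments.

Theorem proposition8p4 (Gm : groupType) (n : nat) (Sg : Gm -> Prop) (r : nat) (h : Gm) :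
  (1 <= n)%N ->
  nilpotent_le Gm n ->
  inv_closed Sg -> ~ Sg 1 -> generates Sg ->
  (maxn (2 ^ (n + 1)) 5 <= r)%N ->
  Sg h -> involution h ->
  local_2sep Sg r 1 h ->
  (forall v, ~ local_cutvertex Sg r v) ->
  (forall g, Sg g -> traverses_sym Sg r h g -> g * h = h * g) /\
  (forall g, Sg g -> traverses_antisym Sg r h g -> ~ traverses_sym Sg r h g ->
     involution (g * h)).
Proof.
move=> Hn Hnil Hinv HS1 _ Hr Sh [hh h1] _ _.
have Hr' : (2 ^ (n + 1) <= r)%N by apply: leq_trans Hr; exact: leq_maxl.
have hi : h^-1 = h := hinv hh.
have g1 : forall g, Sg g -> g <> 1 by move=> g Sg1 E; apply: HS1; rewrite -E.
have gnh : forall g, g^-1 <> h -> g <> h by move=> g H E; apply: H; rewrite E.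
split.
- move=> g Sgg [Htrav [[Hn1 [Hn2 _]] [_ Hsym]]].
  have Hgh : g <> h := gnh g Hn2.
  have Hc : itcomm n g h = 1.
    apply: Hnil => [[]] E; first exact: Hgh.
    by apply: Hgh; rewrite E hi.
  case: (ltnP 1 n) => Hn2'.
  + apply: (part_i Hinv Sh hh Sgg (g1 g Sgg) Hgh Hn2' Hc Hr' h1 Hsym).
    move: Htrav => [x [Hx [_ [_ Hd]]]]; exists x; split => //.
  + have En : n = 1%N by lia.
    rewrite En /= hi in Hc.
    apply: (comm_from hh); by rewrite !mulgA.
- move=> g Sgg [Htrav [[Hn1 [Hn2 _]] [_ Hanti]]] _.
  exfalso.
  have Hgh : g <> h := gnh g Hn2.
  have Hc : itcomm n h g = 1.
    apply: Hnil => [[]] E; first by apply: Hgh.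
    by apply: Hgh; rewrite -(invgK g) -E hi.
  exact: (part_ii Hinv Sh hh Sgg (g1 g Sgg) Hgh Hn Hc Hr' h1 Hanti).
Qed.
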